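(* Let $q$ be a prime power, let $M$ be an invertible $s\times s$ matrix over $\mathbb{F}_q$, and let $1\le t_i\le t_o\le s$. Then the function $\mathbf{y}=\mathbf{x}M^{-1}$ (on row vectors in $\mathbb{F}_q^s$) defines a linear $(t_i,t_o,s,q)$-AONT if and only if every $t_o\times t_i$ submatrix of $M$ has rank $t_i$.
   Context: For a bijection $\phi:\Gamma^s\to\Gamma^s$ over an alphabet $\Gamma$ of size $v$, its array representation is the $v^s\times 2s$ array having, for each $\mathbf{x}=(x_1,\dots,x_s)\in\Gamma^s$, a row $(x_1,\dots,x_s,y_1,\dots,y_s)$ with $(y_1,\dots,y_s)=\phi(\mathbf{x})$. An $N\times k$ array is unbiased with respect to a set $D$ of columns if the rows restricted to $D$ contain every $|D|$-tuple over $\Gamma$ exactly $N/v^{|D|}$ times. $\phi$ is a $(t_i,t_o,s,v)$-AONT if its array representation (columns labelled $1,\dots,2s$) is unbiased with respect to $\{1,\dots,s\}$, $\{s+1,\dots,2s\}$, and $I\cup J$ for every $I\subseteq\{1,\dots,s\}$ with $|I|=t_i$ and every $J\subseteq\{s+1,\dots,2s\}$ with $|J|=s-t_o$. A linear $(t_i,t_o,s,q)$-AONT is one over $\Gamma=\mathbb{F}_q$ of the form $\mathbf{x}\mapsto\mathbf{x}M^{-1}$ for an invertible $s\times s$ matrix $M$ over $\mathbb{F}_q$ (so that $\mathbf{x}=\mathbf{y}M$). *)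

(* Defs.v *)
From HB Require Import structures.
From mathcomp Require Import all_boot all_order all_algebra.
Set Implicit Arguments. Unset Strict Implicit. Unset Printing Implicit Defensive.
Import GRing.Theory.
Local Open Scope ring_scope.

(* Array representation of phi : Gamma^s -> Gamma^s: the row indexed by x is
   (x_1,...,x_s, y_1,...,y_s) with y = phi x; columns are 'I_(s + s),
   the first block (lshift) being the inputs, the second (rshift) the outputs. *)
Definition array_row (Gamma : finType) (s : nat)
  (phi : 'rV[Gamma]_s -> 'rV[Gamma]_s) (x : 'rV[Gamma]_s) : 'rV[Gamma]_(s + s) :=
  row_mx x (phi x).

(* The array (rows indexed by x in Gamma^s, so N = v^s rows) is unbiased
   w.r.t. column set D: every |D|-tuple (given as the restriction to D of some
   f) occurs exactly N / v^|D| times, stated multiplicatively. *)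
Definition unbiased (Gamma : finType) (s : nat)
  (phi : 'rV[Gamma]_s -> 'rV[Gamma]_s) (D : {set 'I_(s + s)}) : Prop :=
  forall f : {ffun 'I_(s + s) -> Gamma},
    (#|[set x : 'rV[Gamma]_s | [forall j in D, array_row phi x ord0 j == f j]]|
       * #|Gamma| ^ #|D| = #|Gamma| ^ s)%N.

Definition inputs (s : nat) : {set 'I_(s + s)} := [set lshift s i | i : 'I_s].
Definition outputs (s : nat) : {set 'I_(s + s)} := [set rshift s i | i : 'I_s].

Definition AONT (Gamma : finType) (ti to s : nat)
  (phi : 'rV[Gamma]_s -> 'rV[Gamma]_s) : Prop :=
  [/\ bijective phi,
      unbiased phi (inputs s),
      unbiased phi (outputs s) &
      forall I J : {set 'I_s}, #|I| = ti -> #|J| = (s - to)%N ->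
        unbiased phi ((@lshift s s @: I) :|: (@rshift s s @: J))].

Definition linmap (F : fieldType) (s : nat) (M : 'M[F]_s) : 'rV[F]_s -> 'rV[F]_s :=
  fun x => x *m invmx M.

(* Main.v *)
Require Import Defs.
From HB Require Import structures.
From mathcomp Require Import all_boot all_order all_algebra.
Set Implicit Arguments. Unset Strict Implicit. Unset Printing Implicit Defensive.
Import GRing.Theory.
From mathcomp Require Import zify.
Local Open Scope ring_scope.

Lemma homo_inj_ord n s (e : 'I_n -> 'I_s) :
  {homo e : i j / (i < j)%N} -> injective e.
Proof.
move=> he i j eij; apply/eqP; case: (ltngtP i j) => // h.
- by have := he _ _ h; rewrite eij ltnn.
- by have := he _ _ h; rewrite eij ltnn.
- by apply/eqP/val_inj.
Qed.

Lemma enum_inc s n (A : {set 'I_s}) : #|A| = n ->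
  exists e : 'I_n -> 'I_s, {homo e : i j / (i < j)%N} /\ A = [set e k | k : 'I_n].
Proof.
move=> <-.
have srt : sorted (fun x y : 'I_s => (x < y)%N) (enum A).
  rewrite /enum_mem -enumT; apply: sorted_filter.
    by move=> x y z; apply: ltn_trans.
  by have := iota_ltn_sorted 0 s; rewrite -val_enum_ord sorted_map.
exists (fun k => enum_val k); split.
  move=> i j lij; rewrite /enum_val.
  have := @sorted_ltn_nth _ (fun x y : 'I_s => (x < y)%N) (fun x y z => @ltn_trans x y z) (enum_default i) _ srt i j.
  rewrite !inE -!cardE.
  move=> H; rewrite (set_nth_default (enum_default i) (enum_default j)); last by rewrite -cardE.
  exact: H.
apply/setP => x; apply/idP/imsetP.
  by move=> Ax; exists (enum_rank_in Ax x) => //; rewrite enum_rankK_in.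
by case=> k _ ->; exact: enum_valP.
Qed.

Section S.
Variables (F : finFieldType) (s : nat) (M : 'M[F]_s).

Definition G (x : 'rV[F]_s) := array_row (linmap M) x.

Lemma GB x y : G (x - y) = G x - G y.
Proof. by rewrite /G /array_row /linmap mulmxBl opp_row_mx add_row_mx. Qed.

Definition S (D : {set 'I_(s + s)}) (f : {ffun 'I_(s + s) -> F}) :=
  [set x : 'rV[F]_s | [forall j in D, G x ord0 j == f j]].

Lemma S_shift (D : {set 'I_(s + s)}) (f : {ffun 'I_(s + s) -> F}) x0 : (forall j, j \in D -> G x0 ord0 j = f j) ->
  #|S D f| = #|S D [ffun => 0]|.
Proof.
move=> hx0.
have -> : S D f = (fun x => x - x0) @^-1: S D [ffun => 0].
  apply/setP => x; rewrite !inE; apply/forallP/forallP => h j; apply/implyP => jD;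
   have := implyP (h j) jD;
   (have E : G (x - x0) ord0 j = G x ord0 j - G x0 ord0 j by rewrite GB !mxE);
   rewrite E ffunE hx0 //.
    by move/eqP ->; rewrite subrr.
  by rewrite subr_eq0.
by apply: card_preimset => x y /= /addIr.
Qed.

Lemma unbiased_iff D :
  unbiased (linmap M) D <->
  forall f : {ffun 'I_(s + s) -> F}, exists x, forall j, j \in D -> G x ord0 j = f j.
Proof.
split.
  move=> hu f; have := hu f.
  have : (0 < #|F| ^ s)%N by rewrite expn_gt0; apply/orP; left; apply/card_gt0P; exists 0.
  case: (posnP #|S D f|) => [|/card_gt0P [x]]; first by move=> h0 pos; rewrite -/(S D f) h0 mul0n => eq0; rewrite -eq0 in pos.
  by rewrite inE => /forallP hx _ _; exists x => j jD; apply/eqP; exact: (implyP (hx j) jD).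
move=> hs f.
have [x0 hx0] := hs f; rewrite -/(S D f) (S_shift hx0).
pose h x := [ffun j => if j \in D then G x ord0 j else 0].
have -> : (#|F| ^ s = #|{: 'M[F]_(1, s)}|)%N by rewrite card_mx mul1n.
rewrite -[#|{: 'M[F]_(1, s)}|]sum1_card (partition_big h (mem (pffun_on 0 D predT))); last first.
  move=> x _; apply/pffun_onP; split.
    by apply/subsetP => j; rewrite inE ffunE; case: (j \in D); rewrite ?eqxx.
  by move=> y /mapP [j _ ->].
rewrite (eq_bigr (fun _ => #|S D [ffun => 0]|)).
  by rewrite sum_nat_const card_pffun_on mulnC.
move=> g /pffun_onP [/subsetP sg _].
rewrite sum1_card.
have [xg hxg] := hs g.
rewrite -(S_shift hxg); apply: eq_card => x; rewrite [in RHS]inE /=.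
transitivity (h x == g); first by [].
apply/eqP/forallP => [hx j|hj].
  by apply/implyP => jD; rewrite -hx ffunE jD.
apply/ffunP => j; rewrite ffunE; case: ifP => jD; first by apply/eqP; exact: (implyP (hj j) jD).
by apply/esym/eqP; apply: contraFT jD => gj; apply: sg; rewrite inE.
Qed.


Lemma surj_iff (I J : {set 'I_s}) : M \in unitmx ->
  (forall f : {ffun 'I_(s + s) -> F}, exists x, forall j,
      j \in (@lshift s s @: I) :|: (@rshift s s @: J) -> G x ord0 j = f j) <->
  (forall a b : 'I_s -> F, exists y : 'rV[F]_s,
      (forall i, i \in I -> (y *m M) ord0 i = a i) /\ (forall k, k \in J -> y ord0 k = b k)).
Proof.
move=> uM; split.
  move=> hs a b.
  have [x hx] := hs [ffun j => row_mx (\row_i a i) (\row_k b k) ord0 j].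
  exists (x *m invmx M); rewrite mulmxKV //; split.
    move=> i iI; have := hx (lshift s i).
    by rewrite ffunE /G /array_row !row_mxEl mxE; apply; rewrite inE; apply/orP; left; apply: imset_f.
  move=> k kJ; have := hx (rshift s k).
  by rewrite ffunE /G /array_row !row_mxEr mxE; apply; rewrite inE; apply/orP; right; apply: imset_f.
move=> hs f.
have [y [h1 h2]] := hs (fun i => f (lshift s i)) (fun k => f (rshift s k)).
exists (y *m M) => j; rewrite inE => /orP [] /imsetP [i iD ->];
  rewrite /G /array_row /linmap ?row_mxEl ?row_mxEr ?mulmxK //; auto.
Qed.

End S.

Lemma rank_iff (F : finFieldType) (s ti to : nat) (M : 'M[F]_s)
  (r : 'I_to -> 'I_s) (c : 'I_ti -> 'I_s) :
  injective r -> injective c ->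
  (forall a b : 'I_s -> F, exists y : 'rV[F]_s,
      (forall i, i \in [set c l | l : 'I_ti] -> (y *m M) ord0 i = a i) /\
      (forall k, k \in ~: [set r m | m : 'I_to] -> y ord0 k = b k)) <->
  \rank (mxsub r c M) = ti.
Proof.
move=> ir ic.
set R : 'M[F]_(to, s) := rowsub r 1%:M.
have eA : mxsub r c M = colsub c (R *m M) by rewrite mxsubcr mul_rowsub_mx mul1mx.
have eAu (u : 'rV[F]_to) l : (u *m mxsub r c M) ord0 l = (u *m R *m M) ord0 (c l).
  by rewrite eA mulmx_colsub -mulmxA mxE.
have eR (u : 'rV[F]_to) k : (u *m R) ord0 k = \sum_m u ord0 m * (r m == k)%:R.
  by rewrite mxE; apply: eq_bigr => m _; rewrite !mxE.
split.
  move=> hs; apply/eqP; rewrite -/(row_full _) -sub1mx; apply/row_subP => l0.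
  have [y [h1 h2]] := hs (fun i => (i == c l0)%:R) (fun _ => 0).
  apply/submxP; exists (\row_m y ord0 (r m)).
  have ey : y = \row_m y ord0 (r m) *m R.
    apply/rowP => j; rewrite eR.
    case: (boolP (j \in [set r m | m : 'I_to])) => [/imsetP [m0 _ ->]|nj].
      rewrite (bigD1 m0) //= mxE eqxx mulr1 big1 ?addr0 // => m nm.
      by rewrite (inj_eq ir) (negbTE nm) mulr0.
    rewrite h2 ?inE ?nj // big1 // => m _.
    case: eqP => [em|]; last by rewrite mulr0.
    by case/negP: nj; rewrite -em; apply: imset_f.
  apply/rowP => l; rewrite eAu -ey h1; last by apply: imset_f.
  by rewrite !mxE (inj_eq ic) eq_sym.
move=> /eqP rk a b.
pose yb := \row_j (if j \in ~: [set r m | m : 'I_to] then b j else 0).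
pose v := \row_l (a (c l) - (yb *m M) ord0 (c l)).
have /submxP [u eu] := submx_full v rk.
exists (yb + u *m R); split.
  move=> i /imsetP [l _ ->].
  rewrite mulmxDl [LHS]mxE -eAu -eu [v _ _]mxE.
  by rewrite addrC subrK.
move=> k kJ; rewrite mxE eR big1 ?addr0; first by rewrite mxE kJ.
move=> m _; case: eqP => [em|]; last by rewrite mulr0.
by move: kJ; rewrite inE -em imset_f.
Qed.

Theorem mainTheorem4 (F : finFieldType) (s ti to : nat) (M : 'M[F]_s) :
  M \in unitmx -> (1 <= ti)%N -> (ti <= to)%N -> (to <= s)%N ->
  (AONT ti to (linmap M) <->
   forall (r : 'I_to -> 'I_s) (c : 'I_ti -> 'I_s),
     {homo r : i j / (i < j)%N} -> {homo c : i j / (i < j)%N} ->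
     \rank (mxsub r c M) = ti).
Proof.
move=> uM ti1 tito tos; split.
  case=> _ _ _ H4 r c hr hc.
  have ir := homo_inj_ord hr; have ic := homo_inj_ord hc.
  apply/(rank_iff M ir ic)/(surj_iff _ _ uM)/unbiased_iff.
  apply: H4; first by rewrite card_imset // card_ord.
  by rewrite cardsCs setCK card_imset // !card_ord.
move=> Hr; split.
- exists (fun x => x *m M) => x; rewrite /linmap ?mulmxK ?mulmxKV //.
- apply/unbiased_iff => f; exists (\row_i f (lshift s i)) => j /imsetP [i _ ->].
  by rewrite /G /array_row row_mxEl mxE.
- apply/unbiased_iff => f; exists ((\row_k f (rshift s k)) *m M) => j /imsetP [k _ ->].
  by rewrite /G /array_row row_mxEr /linmap mulmxK // mxE.
- move=> I J cI cJ.
  have [c [hc eI]] := enum_inc cI.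
  have cK : #|~: J| = to.
    by have := cardsC J; rewrite cJ card_ord; lia.
  have [r [hr eK]] := enum_inc cK.
  apply/unbiased_iff/(surj_iff _ _ uM).
  rewrite eI -[J]setCK eK.
  apply/(rank_iff M (homo_inj_ord hr) (homo_inj_ord hc)).
  exact: Hr.
Qed.
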